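(* Let $p$ be a propositional variable. In each of the modal fragments $\mathrm{ML}_{\{\oplus_3,\Diamond\}}[\{p\}]$, $\mathrm{ML}_{\{\oplus_3,\Box\}}[\{p\}]$, $\mathrm{ML}_{\{\mathsf{oxor},\Diamond\}}[\{p\}]$, $\mathrm{ML}_{\{\mathsf{oxor},\Box\}}[\{p\}]$, $\mathrm{ML}_{\{\mathsf{aimp},\Diamond\}}[\{p\}]$ and $\mathrm{ML}_{\{\mathsf{aimp},\Box\}}[\{p\}]$, the atomic formula $p$ is not uniquely characterized with respect to that fragment by any finite set of labeled examples; in particular none of these fragments admits finite characterizations.
   Context: $\oplus_3(x,y,z)=x\oplus y\oplus z$, $\mathsf{oxor}(x,y,z)=x\lor(y\oplus z)$, $\mathsf{aimp}(x,y,z)=x\land(y\to z)$. For a Boolean function $g$ and $\heartsuit\in\{\Diamond,\Box\}$, $\mathrm{ML}_{\{g,\heartsuit\}}[\{p\}]$ is the set of modal formulas generated by $\phi::=p\mid g(\phi_1,\phi_2,\phi_3)\mid\heartsuit\phi$, with $g$ interpreted pointwise and the usual Kripke semantics. Formulas are equivalent if they are $\mathbf{K}$-equivalent (true at the same worlds of all Kripke models). A labeled example is $(M,w,\mathrm{lab})$ with $M$ a finite Kripke model, $w$ a world, $\mathrm{lab}\in\{0,1\}$; $\phi$ fits it if ($M,w\models\phi$ iff $\mathrm{lab}=1$). A set $E$ of labeled examples uniquely characterizes $\phi$ with respect to a fragment $L$ if $\phi$ fits all of $E$ and every formula of $L$ fitting all of $E$ is equivalent to $\phi$. A fragment admits finite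 characterizations if every formula in it is uniquely characterized with respect to it by a finite set of labeled examples. *)

(* Defs.v *)
From Stdlib Require List.
From mathcomp Require Import all_boot.
Set Implicit Arguments. Unset Strict Implicit. Unset Printing Implicit Defensive.

Definition xor3 (x y z : bool) : bool := x (+) y (+) z.
Definition oxor (x y z : bool) : bool := x || (y (+) z).
Definition aimp (x y z : bool) : bool := x && (y ==> z).

Inductive modality := Dia | Box.

Inductive form : Type :=
| PVar : form
| GApp : form -> form -> form -> form
| Mod : form -> form.

Fixpoint sat (g : bool -> bool -> bool -> bool) (h : modality)
  (W : Type) (R : W -> W -> Prop) (V : W -> Prop) (phi : form) (w : W) : Prop :=
  match phi with
  | PVar => V w
  | GApp a b c => exists b1 b2 b3 : bool,
      (b1 = true <-> sat g h R V a w) /\ (b2 = true <-> sat g h R V b w) /\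
      (b3 = true <-> sat g h R V c w) /\ g b1 b2 b3 = true
  | Mod a => match h with
             | Dia => exists v, R w v /\ sat g h R V a v
             | Box => forall v, R w v -> sat g h R V a v
             end
  end.

Definition equiv g h (phi psi : form) : Prop :=
  forall (W : Type) (R : W -> W -> Prop) (V : W -> Prop) (w : W),
    sat g h R V phi w <-> sat g h R V psi w.

Record example : Type := Example {
  ex_W : finType;
  ex_R : rel ex_W;
  ex_V : pred ex_W;
  ex_w : ex_W;
  ex_lab : bool }.

Definition fits g h (phi : form) (e : example) : Prop :=
  sat g h (fun x y : ex_W e => ex_R x y) (fun x : ex_W e => ex_V x) phi (ex_w e)
  <-> ex_lab e = true.

Definition uniquely_characterizes g h (E : seq example) (phi : form) : Prop :=
  (forall e, List.In e E -> fits g h phi e) /\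
  (forall psi, (forall e, List.In e E -> fits g h psi e) -> equiv g h phi psi).

Definition admits_finite_characterizations g h : Prop :=
  forall phi : form, exists E : seq example, uniquely_characterizes g h E phi.

(* Main.v *)
Require Import Defs.
From mathcomp Require Import all_boot.
From Stdlib Require Import Classical.
Set Implicit Arguments. Unset Strict Implicit. Unset Printing Implicit Defensive.

Fixpoint modn (k : nat) (phi : form) : form :=
  match k with 0 => phi | k'.+1 => Mod (modn k' phi) end.

Definition stepF (h : modality) (W : finType) (R : rel W) (S : {set W}) : {set W} :=
  match h with
  | Dia => [set w | [exists v, R w v && (v \in S)]]
  | Box => [set w | [forall v, R w v ==> (v \in S)]]
  end.

Lemma sat_modn_fin g h (W : finType) (R : rel W) (V : pred W) k w :
  sat g h (fun x y => R x y) (fun x => V x) (modn k PVar) w <->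
  w \in iter k (stepF h R) [set x | V x].
Proof.
elim: k w => [|k IH] w /=; first by rewrite inE.
case: h IH => IH /=; rewrite inE.
- split.
  + by case=> v [Hr Hs]; apply/existsP; exists v; rewrite Hr /=; apply/IH.
  + by case/existsP=> v /andP[Hr Hs]; exists v; split=> //; apply/IH.
- split.
  + by move=> H; apply/forallP=> v; apply/implyP=> Hr; apply/IH; apply: H.
  + by move/forallP=> H v Hr; apply/IH; move: (H v); rewrite Hr.
Qed.

Lemma sat_modn_chain g h (V : nat -> Prop) k i :
  sat g h (fun x y : nat => y = x.+1) V (modn k PVar) i <-> V (i + k).
Proof.
elim: k i => [|k IH] i /=; first by rewrite addn0.
rewrite addnS -addSn.
case: h IH => IH /=.
- split; first by case=> v [-> Hs]; apply/IH.
  by move=> H; exists i.+1; split=> //; apply/IH.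
- split; first by move=> H; apply/IH; apply: H.
  by move=> H v ->; apply/IH.
Qed.

Lemma eventually_periodic (T : finType) (f : T -> T) x :
  exists a L, 0 < L /\ forall k, a <= k -> iter (k + L) f x = iter k f x.
Proof.
pose phi := fun i : 'I_#|T|.+1 => iter i f x.
have : ~~ injectiveb phi.
  apply/negP=> /injectiveP /leq_card; by rewrite card_ord ltnn.
case/injectivePn=> i [j] Hij Heq.
have key : forall i j : 'I_#|T|.+1, i < j -> phi i = phi j ->
    exists a L, 0 < L /\ forall k, a <= k -> iter (k + L) f x = iter k f x.
  move=> i0 j0 Hlt He; exists i0, (j0 - i0); split; first by rewrite subn_gt0.
  move=> k Hk.
  have -> : k + (j0 - i0) = (k - i0) + j0.
    by rewrite addnBA ?(ltnW Hlt) // addnC -addnBA // addnC.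
  rewrite iterD -/(phi j0) -He /phi -iterD subnK //.
case: (ltngtP i j) => H.
- exact: key H Heq.
- exact: key H (esym Heq).
- by move: Hij; rewrite -val_eqE /= H eqxx.
Qed.

Lemma period_mult (T : Type) (u : nat -> T) a L :
  (forall k, a <= k -> u (k + L) = u k) -> forall j k, a <= k -> u (k + j * L) = u k.
Proof.
move=> H; elim=> [|j IH] k Hk; first by rewrite mul0n addn0.
rewrite mulSn (addnC L) addnA H; first exact: IH.
exact: leq_trans Hk (leq_addr _ _).
Qed.

Definition S0 (e : example) : {set ex_W e} := [set x | ex_V x].

Lemma common_period h (E : seq example) :
  exists a L, 0 < a /\ 0 < L /\ forall e, List.In e E -> forall k, a <= k ->
    iter (k + L) (stepF h (@ex_R e)) (S0 e) = iter k (stepF h (@ex_R e)) (S0 e).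
Proof.
elim: E => [|e E [a1 [L1 [Ha1 [HL1 IH]]]]].
  by exists 1, 1; split=> //; split=> // e [].
have [a2 [L2 [HL2 He]]] := eventually_periodic (stepF h (@ex_R e)) (S0 e).
exists (maxn a1 a2), (L1 * L2); split; first by rewrite leq_max Ha1.
split; first by rewrite muln_gt0 HL1.
move=> e' [<-|Hin] k Hk.
- apply: (period_mult (u := fun k => iter k _ _) He).
  exact: leq_trans (leq_maxr _ _) Hk.
- rewrite mulnC; apply: (period_mult (u := fun k => iter k _ _) (IH e' Hin)).
  exact: leq_trans (leq_maxl _ _) Hk.
Qed.

Lemma gapp_same g h W (R : W -> W -> Prop) V x y z w :
  (forall b, g b false false = b) -> (forall b, g b true true = b) ->
  (sat g h R V y w <-> sat g h R V z w) ->
  (sat g h R V (GApp x y z) w <-> sat g h R V x w).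
Proof.
move=> Hf Ht Hyz /=; split.
- case=> b1 [b2 [b3 [H1 [H2 [H3 Hg]]]]].
  have E23 : b2 = b3.
    case: b2 b3 H2 H3 {Hg} => [] [] H2 H3 //.
    + by move: (proj2 H3 (proj1 Hyz (proj1 H2 erefl))).
    + by move: (proj2 H2 (proj2 Hyz (proj1 H3 erefl))).
  subst b3; apply/H1; case: b2 Hg {H2 H3} => Hg.
  + by rewrite Ht in Hg. + by rewrite Hf in Hg.
- move=> Hx; exists true.
  case: (classic (sat g h R V y w)) => Hy.
  + exists true, true; split; first by split.
    split; first by split.
    split; first by split=> // _; apply/Hyz.
    by rewrite Ht.
  + exists false, false; split; first by split.
    split; first by split=> // /Hy.
    split; first by split=> // /Hyz /Hy.
    by rewrite Hf.
Qed.

Theorem propositionB5 (g : bool -> bool -> bool -> bool) (h : modality) :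
  (g = xor3 \/ g = oxor \/ g = aimp) ->
  (forall E : seq example, ~ uniquely_characterizes g h E PVar) /\
  ~ admits_finite_characterizations g h.
Proof.
move=> Hg.
have Hf : forall b, g b false false = b by case: Hg => [->|[->|->]] [].
have Ht : forall b, g b true true = b by case: Hg => [->|[->|->]] [].
have main : forall E : seq example, ~ uniquely_characterizes g h E PVar.
  move=> E [Hfp Huc].
  have [a [L [Ha [HL Hper]]]] := common_period h E.
  pose psi := GApp PVar (modn a PVar) (modn (a + L) PVar).
  have Hfit : forall e, List.In e E -> fits g h psi e.
    move=> e Hin; rewrite /fits.
    rewrite gapp_same //; first exact: Hfp.
    rewrite !sat_modn_fin Hper //.
  have Heq := Huc psi Hfit.
  have HaL : a != a + L by rewrite -{1}(addn0 a) eqn_add2l eq_sym -lt0n.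
  have Ha0 : a != 0 by rewrite -lt0n.
  have HaL0 : a + L != 0 by rewrite addn_eq0 negb_and -!lt0n HL orbT.
  case: Hg => [Eg|[Eg|Eg]].
  - move: (proj2 (Heq nat (fun x y => y = x.+1) (fun i => i = a) 0)).
    move=> H; suff : 0 = a by move/eqP; rewrite eq_sym (negbTE Ha0).
    apply: H; exists false, true, false; split.
      by split=> // /eqP; rewrite eq_sym (negbTE Ha0).
    split; first by split=> // _; apply/sat_modn_chain.
    split; first by split=> // /sat_modn_chain /eqP; rewrite add0n eq_sym (negbTE HaL).
    by rewrite Eg.
  - move: (proj2 (Heq nat (fun x y => y = x.+1) (fun i => i = a) 0)).
    move=> H; suff : 0 = a by move/eqP; rewrite eq_sym (negbTE Ha0).
    apply: H; exists false, true, false; split.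
      by split=> // /eqP; rewrite eq_sym (negbTE Ha0).
    split; first by split=> // _; apply/sat_modn_chain.
    split; first by split=> // /sat_modn_chain /eqP; rewrite add0n eq_sym (negbTE HaL).
    by rewrite Eg.
  - move: (proj1 (Heq nat (fun x y => y = x.+1) (fun i => i = 0 \/ i = a) 0)).
    case; first by left.
    move=> b1 [b2 [b3 [H1 [H2 [H3 H4]]]]].
    have E2 : b2 = true by apply/H2; apply/sat_modn_chain; right.
    have E3 : b3 = false.
      case: b3 H3 {H4} => // H3; move: (proj1 H3 erefl) => /sat_modn_chain.
      rewrite add0n; case=> /eqP; by rewrite ?(negbTE HaL0) ?(negbTE HaL) // eq_sym (negbTE HaL).
    by rewrite E2 E3 Eg /aimp andbF in H4.
split=> //.
move=> Hadm; have [E HE] := Hadm PVar; exact: main E HE.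
Qed.
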